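(* Let $S$ be a $0$-left cancellative semigroup admitting least common multiples. Then: (i) the set of open ultracharacters of $\mathfrak E(S)$ equals $\{\varphi_\sigma:\sigma \text{ is an open, quasi-maximal string in } S\}$; (ii) the set of ultracharacters of $\mathfrak E(S)$ that are not open equals $\{\hat\theta_u(\varphi): u\in\tilde S,\ \varphi \text{ a ground ultracharacter with } \varphi\in\hat F_u\}$.
   Context: $S$ has zero $0$, $S'=S\setminus\{0\}$; $0$-left cancellative: $st=sr\ne0\Rightarrow t=r$. $\tilde S=S\cup\{1\}$ ($1$ an adjoined identity); $s\mid t$ iff $t\in s\tilde S$; $r$ is a least common multiple of $s,t$ if $sS\cap tS=rS$, $s\mid r$, $t\mid r$; every pair has one. For $s\in S$: $F_s=\{x\in S':sx\ne0\}$, $E_s=sS\setminus\{0\}$, $\theta_s:F_s\to E_s$, $x\mapsto sx$. $\mathcal H(S)$ is the inverse semigroup of partial bijections of $S'$ generated by the $\theta_s$; $\mathfrak E(S)=\{X\subseteq S':\mathrm{id}_X\in\mathcal H(S)\}$ (a semilattice under $\cap$ containing all $E_s,F_s$). A character of $\mathfrak E(S)$ is a nonzero map $\varphi:\mathfrak E(S)\to\{0,1\}$ with $\varphi(\emptyset)=0$, $\varphi(X\cap Y)=\varphi(X)\varphi(Y)$; an ultracharacter is a character $\varphi$ such that $\varphi\le\psi$ pointwise for a character $\psi$ forces $\varphi=\psi$. A string is a nonempty $\sigma\subseteq S$ with $0\notin\sigma$, closed under divisors, any two elements having a common multiple in $\sigma$; it is open if $\sigma=\{s\in S:\exists p\in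 S,\ sp\in\sigma\}$. For a string $\sigma$, $\varphi_\sigma(X)=1$ iff for every $s\in\sigma$ there is $t\in\sigma\cap X$ with $s\mid t$ (else $0$); $\sigma$ is quasi-maximal if $\varphi_\sigma$ is an ultracharacter. For a character $\varphi$ let $\sigma_\varphi=\{s\in S:\varphi(E_s)=1\}$; $\varphi$ is open if $\sigma_\varphi$ is a nonempty open string, and $\varphi$ is a ground character if $\sigma_\varphi=\emptyset$. Dual representation: for $s\in S$, $\hat F_s=\{\varphi:\varphi(F_s)=1\}$ and for $\varphi\in\hat F_s$, $\hat\theta_s(\varphi)(X)=\varphi(\{y\in S':sy\in X\})$ for $X\in\mathfrak E(S)$; $\hat F_1$ is the set of all characters and $\hat\theta_1$ is the identity. *)

(* Defs.v *)
From Stdlib Require Import Classical.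

Record zsemigroup := ZSemigroup {
  car :> Type;
  mul : car -> car -> car;
  zero : car;
  mulA : forall x y w, mul x (mul y w) = mul (mul x y) w;
  mul0l : forall x, mul zero x = zero;
  mul0r : forall x, mul x zero = zero
}.

Section Defs.
Variable S : zsemigroup.
Local Notation "x * y" := (mul S x y).
Local Notation "0" := (zero S).

Definition zero_left_cancellative : Prop :=
  forall s t r : S, s * t = s * r -> s * t <> 0 -> t = r.

(* s | t  iff  t \in s (S \cup {1}) *)
Definition divides (s t : S) : Prop := t = s \/ exists u, t = s * u.

Definition is_lcm (s t r : S) : Prop :=
  (forall x : S, ((exists a, x = s * a) /\ (exists b, x = t * b))
                 <-> (exists c, x = r * c))
  /\ divides s r /\ divides t r.

Definition admits_lcm : Prop := forall s t : S, exists r, is_lcm s t r.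

Definition Fset (s : S) : S -> Prop := fun x => x <> 0 /\ s * x <> 0.
Definition Eset (s : S) : S -> Prop := fun x => x <> 0 /\ exists y, x = s * y.
Definition theta (s : S) : S -> S -> Prop := fun x y => Fset s x /\ y = s * x.

(* H(S): the inverse semigroup of partial bijections of S' generated by the
   theta_s (partial bijections represented by their graphs). *)
Inductive inH : (S -> S -> Prop) -> Prop :=
| H_gen : forall s, inH (theta s)
| H_inv : forall R, inH R -> inH (fun x y => R y x)
| H_comp : forall R Q, inH R -> inH Q ->
    inH (fun x y => exists w, Q x w /\ R w y).

Definition inE (X : S -> Prop) : Prop :=
  (forall x, X x -> x <> 0) /\
  exists R, inH R /\ forall x y, R x y <-> (x = y /\ X x).

(* Characters are represented Prop-valued: phi X  means  phi(X) = 1. *)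
Definition character (phi : (S -> Prop) -> Prop) : Prop :=
  (exists X, inE X /\ phi X) /\
  ~ phi (fun _ => False) /\
  (forall X Y, inE X -> inE Y ->
     (phi (fun x => X x /\ Y x) <-> (phi X /\ phi Y))).

Definition char_eq (phi psi : (S -> Prop) -> Prop) : Prop :=
  forall X, inE X -> (phi X <-> psi X).

Definition ultracharacter (phi : (S -> Prop) -> Prop) : Prop :=
  character phi /\
  forall psi, character psi -> (forall X, inE X -> phi X -> psi X) ->
    char_eq phi psi.

Definition is_string (sigma : S -> Prop) : Prop :=
  (exists s, sigma s) /\ ~ sigma 0 /\
  (forall s t, sigma t -> divides s t -> sigma s) /\
  (forall s t, sigma s -> sigma t ->
     exists r, sigma r /\ divides s r /\ divides t r).

Definition open_string (sigma : S -> Prop) : Prop :=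
  forall s, sigma s <-> exists p, sigma (s * p).

Definition phi_of (sigma : S -> Prop) : (S -> Prop) -> Prop :=
  fun X => forall s, sigma s -> exists t, sigma t /\ X t /\ divides s t.

Definition quasi_maximal (sigma : S -> Prop) : Prop :=
  ultracharacter (phi_of sigma).

Definition sigma_of (phi : (S -> Prop) -> Prop) : S -> Prop :=
  fun s => phi (Eset s).

Definition open_char (phi : (S -> Prop) -> Prop) : Prop :=
  (exists s, sigma_of phi s) /\ is_string (sigma_of phi) /\
  open_string (sigma_of phi).

Definition ground_char (phi : (S -> Prop) -> Prop) : Prop :=
  forall s, ~ sigma_of phi s.

(* tilde S = S + {1}, encoded as option S with None = 1 *)
Definition hatF (u : option S) (phi : (S -> Prop) -> Prop) : Prop :=
  match u with
  | None => character phi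
  | Some s => character phi /\ phi (Fset s)
  end.

Definition hattheta (u : option S) (phi : (S -> Prop) -> Prop)
  : (S -> Prop) -> Prop :=
  match u with
  | None => phi
  | Some s => fun X => phi (fun y => y <> 0 /\ X (s * y))
  end.

End Defs.

(* Main.v *)
Require Import Defs.
From Stdlib Require Import Classical FunctionalExtensionality PropExtensionality List.
Import ListNotations.

Lemma set_ext {T : Type} (X Y : T -> Prop) : (forall x, X x <-> Y x) -> X = Y.
Proof. intro H. apply functional_extensionality; intro x.
  apply propositional_extensionality. apply H. Qed.

Definition om {S : zsemigroup} (a : option S) (z : S) : S :=
  match a with None => z | Some a => mul S a z end.
Definition mo {S : zsemigroup} (z : S) (q : option S) : S :=
  match q with None => z | Some q => mul S z q end.
Definition oo {S : zsemigroup} (a b : option S) : option S :=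
  match a, b with None, _ => b | _, None => a | Some a, Some b => Some (mul S a b) end.

Lemma om_oo {S : zsemigroup} (a b : option S) z : om (oo a b) z = om a (om b z).
Proof. destruct a, b; simpl; auto. symmetry; apply mulA. Qed.
Lemma om_mo {S : zsemigroup} (a q : option S) z : om a (mo z q) = mo (om a z) q.
Proof. destruct a, q; simpl; auto. apply mulA. Qed.
Lemma om_mul {S : zsemigroup} (a : option S) z y : om a (mul S z y) = mul S (om a z) y.
Proof. destruct a; simpl; auto. apply mulA. Qed.
Lemma om_0 {S : zsemigroup} (a : option S) : om a (zero S) = zero S.
Proof. destruct a; simpl; auto. apply mul0r. Qed.
Lemma mo_0 {S : zsemigroup} (q : option S) : mo (zero S) q = zero S.
Proof. destruct q; simpl; auto. apply mul0l. Qed.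
Lemma mo_mul {S : zsemigroup} (p : S) a c : mul S (mo p a) c = mul S p (om a c).
Proof. destruct a; simpl; auto. symmetry; apply mulA. Qed.

Lemma divides_iff {S : zsemigroup} (s t : S) : divides S s t <-> exists q, t = mo s q.
Proof. unfold divides; split.
  - intros [H|[u H]]; [exists None|exists (Some u)]; auto.
  - intros [[q|] H]; simpl in H; eauto.
Qed.
Lemma divides_refl {S : zsemigroup} (s : S) : divides S s s.
Proof. left; auto. Qed.
Lemma divides_trans {S : zsemigroup} (a b c : S) :
  divides S a b -> divides S b c -> divides S a c.
Proof. intros [H|[u H]] [H'|[u' H']]; subst; unfold divides; eauto.
  right; exists (mul S u u'); apply eq_sym, mulA. Qed.
Lemma divides_mulr {S : zsemigroup} (s r q : S) : divides S s r -> divides S s (mul S r q).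
Proof. intros [H|[u H]]; subst; right; eauto. exists (mul S u q); apply eq_sym, mulA. Qed.

Lemma ocancel {S : zsemigroup} (Hc : zero_left_cancellative S) (a : option S) x y :
  om a x = om a y -> om a x <> zero S -> x = y.
Proof. destruct a; simpl; auto. intros; eapply Hc; eauto. Qed.

Definition guards {S : zsemigroup} (W : list (option S)) (z : S) : Prop :=
  forall w, In w W -> om w z <> zero S.

Lemma guards_incl {S : zsemigroup} (A B : list (option S)) z :
  (forall w, In w A -> In w B) -> guards B z -> guards A z.
Proof. unfold guards; auto. Qed.

Lemma guards_app {S : zsemigroup} (A B : list (option S)) z :
  guards (A ++ B) z <-> guards A z /\ guards B z.
Proof. unfold guards; split.
  - intro H; split; intros w Hw; apply H, in_or_app; auto.
  - intros [H1 H2] w Hw; apply in_app_or in Hw; destruct Hw; auto.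
Qed.

Lemma guards_map {S : zsemigroup} (W : list (option S)) a c :
  guards (map (fun w => oo w a) W) c <-> guards W (om a c).
Proof. unfold guards; split.
  - intros H w Hw. rewrite <- om_oo. apply H. apply in_map_iff. eauto.
  - intros H w Hw. apply in_map_iff in Hw. destruct Hw as [w' [<- Hw']].
    rewrite om_oo. auto.
Qed.

Definition NF {S : zsemigroup} (v u : option S) (W : list (option S)) (x y : S) :=
  exists z, guards (None :: v :: u :: W) z /\ x = om v z /\ y = om u z.

Lemma factor {S : zsemigroup} (Hc : zero_left_cancellative S) (Hl : admits_lcm S)
  (u1 v2 : option S) : exists a b,
  (forall c, om u1 (om a c) = om v2 (om b c)) /\
  forall z1 z2, om u1 z1 = om v2 z2 -> om u1 z1 <> zero S ->
     exists c, z1 = om a c /\ z2 = om b c.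
Proof.
  destruct u1 as [p|].
  2:{ exists v2, None; split; [reflexivity|]. intros z1 z2 H _; exists z2; simpl in *; auto. }
  destruct v2 as [q|].
  2:{ exists None, (Some p); split; [reflexivity|]. intros z1 z2 H _; exists z1; simpl in *; auto. }
  destruct (Hl p q) as [r [Hiff [Hp Hq]]].
  apply divides_iff in Hp; destruct Hp as [a Ha].
  apply divides_iff in Hq; destruct Hq as [b Hb].
  exists a, b; split.
  - intro c; simpl. rewrite <- !mo_mul, <- Ha, <- Hb. reflexivity.
  - simpl; intros z1 z2 H Hnz.
    destruct (proj1 (Hiff (mul S p z1))) as [c Hc1].
    { split; eauto. }
    exists c; split.
    + apply (Hc p); auto. rewrite Hc1, Ha, mo_mul. reflexivity.
    + apply (Hc q); [|rewrite <- H; auto]. rewrite <- H, Hc1, Hb, mo_mul. reflexivity.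
Qed.

Lemma NF_inH {S : zsemigroup} (Hc : zero_left_cancellative S) (Hl : admits_lcm S)
  (R : S -> S -> Prop) : inH S R -> exists v u W, forall x y, R x y <-> NF v u W x y.
Proof.
  induction 1 as [s | R HR IH | R Q HR IHR HQ IHQ].
  - exists None, (Some s), []. intros x y; unfold theta, Fset, NF, guards; simpl; split.
    + intros [[H1 H2] ->]. exists x; repeat split; auto.
      intros w [<-|[<-|[<-|[]]]]; simpl; auto.
    + intros [z [G [-> ->]]]. repeat split; auto.
      apply (G None); auto. apply (G (Some s)); auto.
  - destruct IH as [v [u [W H]]]. exists u, v, W. intros x y; rewrite H; unfold NF.
    split; intros [z [G E]]; exists z; split; try tauto;
      (eapply guards_incl; [|exact G]); simpl; tauto.
  - destruct IHR as [v2 [u2 [W2 HR']]]. destruct IHQ as [v1 [u1 [W1 HQ']]].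
    destruct (factor Hc Hl u1 v2) as [a [b [Hid Hfac]]].
    exists (oo v1 a), (oo u2 b),
      (None :: map (fun w => oo w a) (None :: v1 :: u1 :: W1)
            ++ map (fun w => oo w b) (None :: v2 :: u2 :: W2)).
    intros x y. split.
    + intros [w [Hq Hr]]. apply HQ' in Hq. apply HR' in Hr.
      destruct Hq as [z1 [G1 [Ex Ew]]]. destruct Hr as [z2 [G2 [Ew' Ey]]].
      assert (Hnz : om u1 z1 <> zero S) by (apply G1; simpl; auto).
      destruct (Hfac z1 z2) as [c [Ez1 Ez2]]; [congruence|auto|].
      assert (G : guards (None :: map (fun w => oo w a) (None :: v1 :: u1 :: W1)
            ++ map (fun w => oo w b) (None :: v2 :: u2 :: W2)) c).
      { intros w0 Hw0. destruct Hw0 as [<-|Hw0].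
        - simpl. intro Hc0. assert (z1 <> zero S) by (apply (G1 None); simpl; auto).
          rewrite Ez1, Hc0, om_0 in H; auto.
        - revert w0 Hw0.
          apply guards_app; split; apply guards_map; [rewrite <- Ez1|rewrite <- Ez2]; auto. }
      exists c; split; [|split].
      * eapply guards_incl; [|exact G]. intros w0 Hw0.
        destruct Hw0 as [<-|[<-|[<-|Hw0]]].
        -- left; auto.
        -- right; apply in_or_app; left; apply in_map_iff; exists v1; simpl; auto.
        -- right; apply in_or_app; right; apply in_map_iff; exists u2; simpl; auto.
        -- exact Hw0.
      * rewrite om_oo, <- Ez1; auto.
      * rewrite om_oo, <- Ez2; auto.
    + intros [c [G [Ex Ey]]].
      assert (G' : guards (map (fun w => oo w a) (None :: v1 :: u1 :: W1)
            ++ map (fun w => oo w b) (None :: v2 :: u2 :: W2)) c).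
      { eapply guards_incl; [|exact G]. simpl; tauto. }
      apply guards_app in G'; destruct G' as [Ga Gb].
      apply guards_map in Ga; apply guards_map in Gb.
      exists (om u1 (om a c)). split.
      * apply HQ'. exists (om a c); split; auto. split; auto. rewrite Ex, om_oo; auto.
      * apply HR'. exists (om b c); split; auto. split; auto. rewrite Ey, om_oo; auto.
Qed.
Lemma NF_E {S : zsemigroup} (Hc : zero_left_cancellative S) (Hl : admits_lcm S)
  (X : S -> Prop) : inE S X -> exists v W,
    forall x, X x <-> exists z, guards W z /\ x = om v z.
Proof.
  intros [Hnz [R [HR HRX]]]. destruct (NF_inH Hc Hl R HR) as [v [u [W HN]]].
  exists v, (None :: v :: u :: W). intro x; split.
  - intro Hx. assert (R x x) by (apply HRX; auto). apply HN in H.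
    destruct H as [z [G [E1 _]]]; eauto.
  - intros [z [G Ex]]. assert (NF v u W x (om u z)) by (exists z; auto).
    apply HN, HRX in H. tauto.
Qed.

Lemma inE_nz {S : zsemigroup} (X : S -> Prop) x : inE S X -> X x -> x <> zero S.
Proof. intros [H _]; auto. Qed.

Lemma convex {S : zsemigroup} (Hc : zero_left_cancellative S) (Hl : admits_lcm S)
  (X : S -> Prop) a b c : inE S X -> X a -> X c -> divides S a b -> divides S b c ->
  c <> zero S -> X b.
Proof.
  intros HX Ha Hcc Hab Hbc Hc0. destruct (NF_E Hc Hl X HX) as [v [W HW]].
  apply HW in Ha; destruct Ha as [za [Ga ->]].
  apply HW in Hcc; destruct Hcc as [zc [Gc ->]].
  apply divides_iff in Hab; destruct Hab as [q1 ->].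
  apply divides_iff in Hbc; destruct Hbc as [q2 Hq].
  rewrite <- !om_mo in Hq. apply (ocancel Hc) in Hq; auto.
  apply HW. exists (mo za q1); split; [|rewrite om_mo; auto].
  intros w Hw Hw0. apply (Gc w Hw). rewrite Hq, om_mo, Hw0. apply mo_0.
Qed.

Lemma inE_ext {S : zsemigroup} (X Y : S -> Prop) : (forall x, X x <-> Y x) -> inE S X -> inE S Y.
Proof. intro H; rewrite (set_ext X Y H); auto. Qed.

Lemma inE_Eset {S : zsemigroup} (s : S) : inE S (Eset S s).
Proof.
  split. { intros x [H _]; auto. }
  exists (fun x y => exists w, (fun x y => theta S s y x) x w /\ theta S s w y).
  split. { apply H_comp; [apply H_gen|apply H_inv, H_gen]. }
  unfold theta, Fset, Eset. intros x y; split.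
  - intros [w [[[H1 H2] Hx] [_ Hy]]]. subst. split; eauto.
  - intros [-> [Hx [w Hw]]]. exists w. subst. assert (w <> zero S).
    { intro; subst; apply Hx, mul0r. } tauto.
Qed.

Lemma inE_Fset {S : zsemigroup} (Hc : zero_left_cancellative S) (s : S) : inE S (Fset S s).
Proof.
  split. { intros x [H _]; auto. }
  exists (fun x y => exists w, theta S s x w /\ (fun x y => theta S s y x) w y).
  split. { apply H_comp; [apply H_inv, H_gen|apply H_gen]. }
  unfold theta, Fset. intros x y; split.
  - intros [w [[Fx ->] [Fy Hw]]]. split; auto. symmetry; eapply Hc; eauto. tauto.
  - intros [<- Fx]. exists (mul S s x); tauto.
Qed.

Lemma inE_empty {S : zsemigroup} : inE S (fun _ : S => False).
Proof.
  split. { tauto. }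
  exists (theta S (zero S)). split. { apply H_gen. }
  unfold theta, Fset. intros x y; split; [|tauto].
  intros [[_ H] _]. rewrite mul0l in H. tauto.
Qed.

Lemma inE_inter {S : zsemigroup} (X Y : S -> Prop) : inE S X -> inE S Y ->
  inE S (fun x => X x /\ Y x).
Proof.
  intros [HX [RX [IX EX]]] [HY [RY [IY EY]]]. split. { intros x [H _]; auto. }
  exists (fun x y => exists w, RY x w /\ RX w y). split. { apply H_comp; auto. }
  intros x y; split.
  - intros [w [H1 H2]]. apply EY in H1; apply EX in H2. destruct H1 as [-> ?], H2 as [-> ?]. auto.
  - intros [-> [? ?]]. exists y; split; [apply EY|apply EX]; auto.
Qed.

Definition pre {S : zsemigroup} (s : S) (X : S -> Prop) : S -> Prop :=
  fun y => y <> zero S /\ X (mul S s y).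
Definition img {S : zsemigroup} (s : S) (X : S -> Prop) : S -> Prop :=
  fun x => exists y, X y /\ Fset S s y /\ x = mul S s y.

Lemma inE_pre {S : zsemigroup} (Hc : zero_left_cancellative S) (s : S) X :
  inE S X -> inE S (pre s X).
Proof.
  intros [HX [R [IR ER]]]. split. { intros x [H _]; auto. }
  exists (fun x y => exists w, theta S s x w /\
     (fun x y => exists w', R x w' /\ (fun x y => theta S s y x) w' y) w y).
  split. { apply H_comp; [|apply H_gen]. apply H_comp; [apply H_inv, H_gen|auto]. }
  unfold theta, pre, Fset. intros x y; split.
  - intros [w [[Fx ->] [w' [Hr [Fy Hy]]]]]. apply ER in Hr. destruct Hr as [<- Hx].
    assert (x = y) by (eapply Hc; eauto; tauto). subst. tauto.
  - intros [-> [Hy HXy]]. exists (mul S s y). split.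
    + repeat split; auto; apply (HX _ HXy).
    + exists (mul S s y). split; [apply ER; auto|]. repeat split; auto; apply (HX _ HXy).
Qed.

Lemma inE_img {S : zsemigroup} (Hc : zero_left_cancellative S) (s : S) X :
  inE S X -> inE S (img s X).
Proof.
  intros [HX [R [IR ER]]]. split. { intros x [y [_ [[_ H] ->]]]; auto. }
  exists (fun x y => exists w,
     (fun x y => exists w', (fun x y => theta S s y x) x w' /\ R w' y) x w /\ theta S s w y).
  split. { apply H_comp; [apply H_gen|]. apply H_comp; [auto|apply H_inv, H_gen]. }
  unfold theta, img, Fset. intros x y; split.
  - intros [w [[w' [[Fw' Hx] Hr]] [Fw Hy]]]. apply ER in Hr. destruct Hr as [<- Hw]. subst.
    split; auto. exists w'; auto.
  - intros [-> [w [Hw [Fw ->]]]]. exists w. split; [|auto].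
    exists w; split; [auto|apply ER; auto].
Qed.

Lemma char_ext {S : zsemigroup} (phi : (S -> Prop) -> Prop) X Y :
  (forall x, X x <-> Y x) -> phi X -> phi Y.
Proof. intro H; rewrite (set_ext X Y H); auto. Qed.

Lemma char_empty {S : zsemigroup} (phi : (S -> Prop) -> Prop) X :
  character S phi -> (forall x, ~ X x) -> ~ phi X.
Proof. intros [_ [H _]] HX Hp. apply H. eapply char_ext; [|exact Hp]. firstorder. Qed.

Lemma char_mono {S : zsemigroup} (phi : (S -> Prop) -> Prop) X Y :
  character S phi -> inE S X -> inE S Y -> (forall x, X x -> Y x) -> phi X -> phi Y.
Proof.
  intros [_ [_ Hm]] HX HY Hs Hp. assert (phi (fun x => X x /\ Y x)).
  { eapply char_ext; [|exact Hp]. firstorder. }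
  apply Hm in H; tauto.
Qed.

Lemma char_disj {S : zsemigroup} (phi : (S -> Prop) -> Prop) X Y :
  character S phi -> inE S X -> inE S Y -> (forall x, X x -> Y x -> False) ->
  phi X -> phi Y -> False.
Proof.
  intros Hch HX HY Hd H1 H2. destruct Hch as [A [B Hm]].
  apply (char_empty phi (fun x => X x /\ Y x)); [split; auto| |].
  - firstorder.
  - apply Hm; auto.
Qed.

Lemma ultra_transfer {S : zsemigroup} (phi psi : (S -> Prop) -> Prop) :
  char_eq S phi psi -> ultracharacter S phi -> ultracharacter S psi.
Proof.
  intros He [[[X [HX HpX]] [H0 Hm]] Hu]. split; [split; [|split]|].
  - exists X; split; auto. apply He; auto.
  - intro H. apply H0, He; auto. apply inE_empty.
  - intros A B HA HB. pose proof (He _ (inE_inter A B HA HB)).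
    pose proof (He A HA); pose proof (He B HB); specialize (Hm A B HA HB); tauto.
  - intros chi Hchi Hle A HA.
    assert (Hc : char_eq S phi chi).
    { apply Hu; auto. intros B HB HpB. apply Hle; auto. apply He; auto. }
    pose proof (He A HA); pose proof (Hc A HA); tauto.
Qed.
Lemma string_nz {S : zsemigroup} (sigma : S -> Prop) t :
  is_string S sigma -> sigma t -> t <> zero S.
Proof. intros [_ [H0 _]] Ht E; subst; auto. Qed.

Lemma phi_of_E {S : zsemigroup} (sigma : S -> Prop) s :
  is_string S sigma -> open_string S sigma -> sigma s -> phi_of S sigma (Eset S s).
Proof.
  intros Hs Ho Hss t Ht. pose proof Hs as Hs_; destruct Hs_ as [Hne [H0 [Hd Hcm]]].
  destruct (Hcm s t Hss Ht) as [r [Hr [Hsr Htr]]].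
  destruct (proj1 (Ho r) Hr) as [q Hq].
  exists (mul S r q). split; auto. split.
  - split. { eapply string_nz; eauto. }
    apply divides_iff in Hsr; destruct Hsr as [a ->]. rewrite mo_mul. eauto.
  - apply divides_mulr; auto.
Qed.

Lemma phi_of_E_iff {S : zsemigroup} (sigma : S -> Prop) s :
  is_string S sigma -> open_string S sigma -> (phi_of S sigma (Eset S s) <-> sigma s).
Proof.
  intros Hs Ho; split; [|apply phi_of_E; auto].
  intro H. destruct Hs as [[t Ht] [H0 [Hd Hcm]]].
  destruct (H t Ht) as [r [Hr [[_ [y ->]] _]]]. eapply Hd; eauto. right; eauto.
Qed.

Lemma lemmaA {S : zsemigroup} (Hc : zero_left_cancellative S) (Hl : admits_lcm S)
  (sigma : S -> Prop) X : is_string S sigma -> inE S X -> phi_of S sigma X ->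
  exists t0, sigma t0 /\ forall t, sigma t -> divides S t0 t -> X t.
Proof.
  intros Hs HX Hp. pose proof Hs as Hs_; destruct Hs_ as [[s0 Hs0] [H0 [Hd Hcm]]].
  destruct (Hp s0 Hs0) as [t0 [Ht0 [Xt0 _]]]. exists t0; split; auto.
  intros t Ht Hdt. destruct (Hp t Ht) as [t' [Ht' [Xt' Htt']]].
  apply (convex Hc Hl X t0 t t'); auto. eapply string_nz; eauto.
Qed.

Lemma lemma1 {S : zsemigroup} (Hc : zero_left_cancellative S) (Hl : admits_lcm S)
  (sigma : S -> Prop) : is_string S sigma -> open_string S sigma ->
  character S (phi_of S sigma).
Proof.
  intros Hs Ho. pose proof Hs as Hs'. destruct Hs' as [[s0 Hs0] [H0 [Hd Hcm]]].
  split; [|split].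
  - exists (Eset S s0). split; [apply inE_Eset|apply phi_of_E; auto].
  - intro H. destruct (H s0 Hs0) as [t [_ [[] _]]].
  - intros X Y HX HY; split.
    + intro H; split; intros s Hss; destruct (H s Hss) as [t [? [[? ?] ?]]]; eauto.
    + intros [HpX HpY].
      destruct (lemmaA Hc Hl sigma X Hs HX HpX) as [t0 [Ht0 E0]].
      destruct (lemmaA Hc Hl sigma Y Hs HY HpY) as [t1 [Ht1 E1]].
      destruct (Hcm t0 t1 Ht0 Ht1) as [r [Hr [H0r H1r]]].
      intros s Hss. destruct (Hcm s r Hss Hr) as [r' [Hr' [Hsr' Hrr']]].
      exists r'. split; auto. split; auto. split.
      * apply E0; auto. eapply divides_trans; eauto.
      * apply E1; auto. eapply divides_trans; eauto.
Qed.

Lemma lemma2 {S : zsemigroup} (Hc : zero_left_cancellative S) (Hl : admits_lcm S)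
  (phi : (S -> Prop) -> Prop) X : character S phi ->
  is_string S (sigma_of S phi) -> open_string S (sigma_of S phi) ->
  inE S X -> phi X -> phi_of S (sigma_of S phi) X.
Proof.
  intros Hch Hs Ho HX HpX s Hss.
  destruct (NF_E Hc Hl X HX) as [v [W HW]].
  assert (Hz : exists z, sigma_of S phi (om v z) /\ divides S s (om v z)).
  { destruct v as [p|].
    - assert (Hp : sigma_of S phi p).
      { unfold sigma_of. eapply char_mono; eauto. apply inE_Eset.
        intros x Hx. split; [eapply inE_nz; eauto|].
        apply HW in Hx; destruct Hx as [z [_ ->]]; simpl; eauto. }
      destruct Hs as [_ [_ [_ Hcm]]].
      destruct (Hcm s p Hss Hp) as [r [Hr [Hsr Hpr]]].
      destruct (proj1 (Ho r) Hr) as [q Hq].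
      apply divides_iff in Hpr; destruct Hpr as [a Ha].
      exists (om a q). simpl. rewrite <- mo_mul, <- Ha. split; auto.
      apply divides_mulr; auto.
    - exists s; simpl; split; auto; apply divides_refl. }
  destruct Hz as [z [Hsz Hdz]].
  exists (om v z). split; auto. split; auto.
  apply HW. exists z. split; auto.
  intros w Hw Hwz.
  apply (char_disj phi X (Eset S (om v z))); auto; [apply inE_Eset|].
  intros x Hx [Hx0 [y Hy]].
  apply HW in Hx. destruct Hx as [z' [G' Ex]].
  rewrite <- om_mul in Hy. subst x. apply (ocancel Hc) in Hy; auto.
  apply (G' w Hw). rewrite Hy, om_mul, Hwz. apply mul0l.
Qed.

Lemma sigma_string {S : zsemigroup} (Hl : admits_lcm S) (phi : (S -> Prop) -> Prop) :
  character S phi -> (exists s, sigma_of S phi s) -> is_string S (sigma_of S phi).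
Proof.
  intros Hch Hne. unfold sigma_of. split; [auto|split; [|split]].
  - apply (char_empty phi); auto. intros x [Hx [y Hy]]. rewrite mul0l in Hy; auto.
  - intros s t Ht [->|[u ->]]; auto.
    apply (char_mono phi (Eset S (mul S s u)) (Eset S s)); auto; try apply inE_Eset.
    intros x [Hx [y ->]]. split; auto. exists (mul S u y). symmetry; apply mulA.
  - intros s t Hs Ht. destruct (Hl s t) as [r [Hiff [Hsr Htr]]].
    exists r; split; auto. destruct Hch as [_ [_ Hm]].
    assert (phi (fun x => Eset S s x /\ Eset S t x)) by (apply Hm; auto; apply inE_Eset).
    eapply char_ext; [|exact H]. intro x. unfold Eset. split.
    + intros [[Hx A] [_ B]]. split; auto. apply Hiff; auto.
    + intros [Hx C]. apply Hiff in C. tauto.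
Qed.
Lemma img_pre {S : zsemigroup} (s : S) X : inE S X ->
  forall x, img s (pre s X) x <-> X x /\ Eset S s x.
Proof.
  intros HX x; unfold img, pre, Eset, Fset; split.
  - intros [y [[Hy HXy] [[_ Hsy] ->]]]. eauto.
  - intros [Hx [Hx0 [y ->]]]. exists y.
    assert (y <> zero S) by (intro; subst; apply Hx0, mul0r). tauto.
Qed.

Lemma pre_img {S : zsemigroup} (Hc : zero_left_cancellative S) (s : S) X :
  forall y, pre s (img s X) y <-> X y /\ Fset S s y.
Proof.
  intros y; unfold img, pre, Fset; split.
  - intros [Hy [y' [HX [[H1 H2] E]]]]. assert (y = y') by (eapply Hc; eauto; congruence).
    subst; tauto.
  - intros [HX [H1 H2]]. split; auto. exists y; tauto.
Qed.

Lemma img_inter {S : zsemigroup} (Hc : zero_left_cancellative S) (s : S) X Y :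
  forall x, img s (fun x => X x /\ Y x) x <-> img s X x /\ img s Y x.
Proof.
  intros x; unfold img, Fset; split.
  - intros [y [[A B] [C ->]]]. split; eauto.
  - intros [[y [A [C ->]]] [y' [B [D E]]]]. assert (y = y') by (eapply Hc; eauto; tauto).
    subst; eauto.
Qed.

Lemma img_F {S : zsemigroup} (s : S) : forall x, img s (Fset S s) x <-> Eset S s x.
Proof.
  intros x; unfold img, Fset, Eset; split.
  - intros [y [A [_ ->]]]. split; [tauto|eauto].
  - intros [Hx0 [y ->]]. exists y. assert (y <> zero S) by (intro; subst; apply Hx0, mul0r).
    tauto.
Qed.

Lemma pre_E {S : zsemigroup} (s : S) : forall y, pre s (Eset S s) y <-> Fset S s y.
Proof. intros y; unfold pre, Eset, Fset; split; [tauto|]. intros [A B]; eauto. Qed.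

Lemma img_E {S : zsemigroup} (s t : S) : forall x, img s (Eset S t) x <-> Eset S (mul S s t) x.
Proof.
  intros x; unfold img, Eset, Fset; split.
  - intros [y [[_ [z ->]] [[_ Hn] ->]]]. split; auto. exists z; apply mulA.
  - intros [Hx0 [z ->]]. exists (mul S t z). rewrite mulA.
    assert (mul S t z <> zero S) by (intro H; apply Hx0; rewrite <- mulA, H; apply mul0r).
    repeat split; eauto.
Qed.

Lemma pre_sub {S : zsemigroup} (Hc : zero_left_cancellative S) (s p : S) :
  forall y, pre s (Eset S (mul S s p)) y -> Eset S p y.
Proof.
  intros y [Hy [Hn [z Hz]]]. split; auto. exists z. rewrite <- mulA in Hz.
  eapply Hc; eauto.
Qed.

Lemma hattheta_char {S : zsemigroup} (Hc : zero_left_cancellative S) (s : S) psi :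
  character S psi -> psi (Fset S s) -> character S (fun X => psi (pre s X)).
Proof.
  intros Hch HF. pose proof Hch as [_ [_ Hm]]. split; [|split].
  - exists (Eset S s). split; [apply inE_Eset|]. eapply char_ext; [|exact HF].
    intro; rewrite pre_E; tauto.
  - apply (char_empty psi); auto. intros x [_ []].
  - intros X Y HX HY. rewrite <- Hm by (apply inE_pre; auto).
    split; apply char_ext; intro; unfold pre; tauto.
Qed.

Lemma img_char {S : zsemigroup} (Hc : zero_left_cancellative S) (s : S) chi :
  character S chi -> chi (Eset S s) -> character S (fun X => chi (img s X)).
Proof.
  intros Hch HE. pose proof Hch as [_ [_ Hm]]. split; [|split].
  - exists (Fset S s). split; [apply inE_Fset; auto|]. eapply char_ext; [|exact HE].
    intro; rewrite img_F; tauto.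
  - apply (char_empty chi); auto. intros x [y [[] _]].
  - intros X Y HX HY. rewrite <- Hm by (apply inE_img; auto).
    split; apply char_ext; intro; rewrite img_inter; auto; tauto.
Qed.

Lemma char_eq_sym {S : zsemigroup} (phi psi : (S -> Prop) -> Prop) :
  char_eq S phi psi -> char_eq S psi phi.
Proof. intros H X HX; symmetry; auto. Qed.
Lemma part_i {S : zsemigroup} (Hc : zero_left_cancellative S) (Hl : admits_lcm S)
  (phi : (S -> Prop) -> Prop) :
     (ultracharacter S phi /\ open_char S phi) <->
     exists sigma : S -> Prop,
       is_string S sigma /\ open_string S sigma /\ quasi_maximal S sigma /\
       char_eq S phi (phi_of S sigma).
Proof.
  split.
  - intros [Hu [Hne [Hs Ho]]]. exists (sigma_of S phi).
    assert (Heq : char_eq S phi (phi_of S (sigma_of S phi))).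
    { apply (proj2 Hu). apply lemma1; auto.
      intros X HX HpX. apply lemma2; auto. apply Hu. }
    split; [auto|split; [auto|split; [|auto]]].
    unfold quasi_maximal. eapply ultra_transfer; eauto.
  - intros [sigma [Hs [Ho [Hq He]]]].
    assert (Hu : ultracharacter S phi).
    { eapply ultra_transfer; [|exact Hq]. apply char_eq_sym; auto. }
    split; auto.
    assert (Hsig : sigma_of S phi = sigma).
    { apply set_ext. intro s. unfold sigma_of.
      pose proof (He (Eset S s) (inE_Eset s)). pose proof (phi_of_E_iff sigma s Hs Ho). tauto. }
    unfold open_char. rewrite Hsig. split; [apply Hs|auto].
Qed.

Lemma part_ii_fwd {S : zsemigroup} (Hc : zero_left_cancellative S) (Hl : admits_lcm S)
  (phi : (S -> Prop) -> Prop) :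
     ultracharacter S phi -> ~ open_char S phi ->
     exists (u : option S) (psi : (S -> Prop) -> Prop),
       ground_char S psi /\ ultracharacter S psi /\ hatF S u psi /\
       char_eq S phi (hattheta S u psi).
Proof.
  intros Hu Hno. pose proof Hu as [Hch Hmax].
  destruct (classic (exists s, sigma_of S phi s)) as [Hne|Hnone].
  2:{ exists None, phi. split; [|split; [auto|split]].
      - intros s Hs; apply Hnone; eauto.
      - apply Hch.
      - intros X _; simpl; tauto. }
  assert (Hs : is_string S (sigma_of S phi)) by (apply sigma_string; auto).
  assert (Hno' : ~ open_string S (sigma_of S phi)) by (intro; apply Hno; split; auto).
  assert (Hex : exists s, sigma_of S phi s /\ ~ exists p, sigma_of S phi (mul S s p)).
  { apply NNPP; intro Hn. apply Hno'. intro s. split.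
    - intro H. apply NNPP; intro H'. apply Hn; eauto.
    - intros [p Hp]. destruct Hs as [_ [_ [Hd _]]]. eapply Hd; eauto. right; eauto. }
  destruct Hex as [s [Hss Hnp]].
  pose proof Hch as [_ [_ Hm]].
  assert (HpsiC : character S (fun X => phi (img s X))) by (apply img_char; auto).
  assert (HpsiF : phi (img s (Fset S s))).
  { eapply char_ext; [|exact Hss]. intro; rewrite img_F; tauto. }
  assert (Hip : forall X, inE S X -> (phi (img s (pre s X)) <-> phi X)).
  { intros X HX. split.
    - intro H. assert (phi (fun x => X x /\ Eset S s x)).
      { eapply char_ext; [|exact H]. apply img_pre; auto. }
      apply Hm in H0; [tauto|auto|apply inE_Eset].
    - intro H. eapply char_ext; [intro; symmetry; apply img_pre; auto|].
      apply Hm; auto. apply inE_Eset. }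
  exists (Some s), (fun X => phi (img s X)). split; [|split; [|split]].
  - intros t Ht. apply Hnp. exists t. unfold sigma_of in *.
    eapply char_ext; [|exact Ht]. apply img_E.
  - split; auto. intros psi' Hpsi' Hle.
    assert (HF' : psi' (Fset S s)) by (apply Hle; auto; apply inE_Fset; auto).
    assert (Hphi'C : character S (fun X => psi' (pre s X))) by (apply hattheta_char; auto).
    assert (Heq : char_eq S phi (fun X => psi' (pre s X))).
    { apply Hmax; auto. intros X HX HpX. apply Hle. apply inE_pre; auto.
      apply Hip; auto. }
    intros X HX. split; [apply Hle; auto|].
    intro H. pose proof Hpsi' as [_ [_ Hm']].
    assert (psi' (pre s (img s X))).
    { eapply char_ext; [intro; symmetry; apply pre_img; auto|].
      apply Hm'; auto. apply inE_Fset; auto. }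
    apply (Heq (img s X)); auto. apply inE_img; auto.
  - split; auto.
  - intros X HX. change (phi X <-> phi (img s (pre s X))). symmetry; apply Hip; auto.
Qed.

Lemma part_ii_bwd {S : zsemigroup} (Hc : zero_left_cancellative S) (Hl : admits_lcm S)
  (phi : (S -> Prop) -> Prop) :
     (exists (u : option S) (psi : (S -> Prop) -> Prop),
       ground_char S psi /\ ultracharacter S psi /\ hatF S u psi /\
       char_eq S phi (hattheta S u psi)) ->
     ultracharacter S phi /\ ~ open_char S phi.
Proof.
  intros [u [psi [Hg [Hu [HF He]]]]].
  destruct u as [s|].
  2:{ simpl in He. split.
      - eapply ultra_transfer; [|exact Hu]. apply char_eq_sym; auto.
      - intros [[t Ht] _]. apply (Hg t). apply He; auto. apply inE_Eset. }
  destruct HF as [Hch HFs].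
  pose proof Hu as [_ Hmax]. pose proof Hch as [_ [_ Hm]].
  assert (Hphi'C : character S (fun X => psi (pre s X))) by (apply hattheta_char; auto).
  assert (HE : psi (pre s (Eset S s))).
  { eapply char_ext; [|exact HFs]. intro; rewrite pre_E; tauto. }
  split.
  - eapply ultra_transfer; [apply char_eq_sym; exact He|]. simpl.
    split; auto. intros chi Hchi Hle.
    assert (HchiE : chi (Eset S s)) by (apply Hle; auto; apply inE_Eset).
    assert (Hpsi'C : character S (fun X => chi (img s X))) by (apply img_char; auto).
    assert (Heq : char_eq S psi (fun X => chi (img s X))).
    { apply Hmax; auto. intros X HX HpX. apply Hle. apply inE_img; auto.
      eapply char_ext; [intro; symmetry; apply pre_img; auto|].
      apply Hm; auto. apply inE_Fset; auto. }
    intros Y HY. split; [apply Hle; auto|].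
    intro H. pose proof Hchi as [_ [_ Hmc]].
    assert (chi (img s (pre s Y))).
    { eapply char_ext; [intro; symmetry; apply img_pre; auto|].
      apply Hmc; auto. apply inE_Eset. }
    apply (Heq (pre s Y)); auto. apply inE_pre; auto.
  - intros [_ [_ Ho]].
    assert (Hss : sigma_of S phi s).
    { unfold sigma_of. apply He; auto. apply inE_Eset. }
    destruct (proj1 (Ho s) Hss) as [p Hp].
    unfold sigma_of in Hp. apply He in Hp; [|apply inE_Eset].
    apply (Hg p). unfold sigma_of.
    apply (char_mono psi (pre s (Eset S (mul S s p)))); auto.
    + apply inE_pre; auto. apply inE_Eset.
    + apply inE_Eset.
    + apply pre_sub; auto.
Qed.

Theorem theorem17p11 (S : zsemigroup)
  (Hcanc : zero_left_cancellative S) (Hlcm : admits_lcm S) :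
  (forall phi : (S -> Prop) -> Prop,
     (ultracharacter S phi /\ open_char S phi) <->
     exists sigma : S -> Prop,
       is_string S sigma /\ open_string S sigma /\ quasi_maximal S sigma /\
       char_eq S phi (phi_of S sigma))
  /\
  (forall phi : (S -> Prop) -> Prop,
     (ultracharacter S phi /\ ~ open_char S phi) <->
     exists (u : option S) (psi : (S -> Prop) -> Prop),
       ground_char S psi /\ ultracharacter S psi /\ hatF S u psi /\
       char_eq S phi (hattheta S u psi)).
Proof.
  split; intro phi.
  - apply part_i; auto.
  - split.
    + intros [Hu Hno]. apply part_ii_fwd; auto.
    + apply part_ii_bwd; auto.
Qed.
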